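(* Let $f \colon \mathcal{J} \to \mathbb{P}^1$ be a pointed map of degree $n\neq 0$. Then there is a pointed naive homotopy between $f$ and a map of the form $M_f \oplus (1,0:0,1)_n$ for some pointed matrix $M_f \in \mathrm{SL}_2(R)$.
   Context: Let $k$ be a field, $R = k[x,y,z,w]/(x+w-1,\,xw-yz)$, $\mathcal{J}=\operatorname{Spec}(R)$ pointed at $\mathbf{j}=(x-1,y,z,w)$, $\mathbb{P}^1$ pointed at $[1:0]$. A morphism $\mathcal{J}\to\mathbb{P}^1$ is an invertible sheaf with two generating sections; its degree is its class in $\operatorname{Pic}(\mathcal{J})\cong\mathbb{Z}$, where $n>0$ corresponds to $\mathcal{P}_n=\langle(x^n,z^n)^T,(y^n,w^n)^T\rangle\subseteq R^2$ and $-n$ to $\mathcal{Q}_n=\langle(x^n,y^n)^T,(z^n,w^n)^T\rangle$. For $n>0$, $(a_0,a_1:b_0,b_1)_n$ is the map with sheaf $\mathcal{P}_n$ and sections $a_0(x^n,z^n)^T+a_1(y^n,w^n)^T$, $b_0(x^n,z^n)^T+b_1(y^n,w^n)^T$; $(a_0,a_1:b_0,b_1)_{-n}$ is analogous with $\mathcal{Q}_n$. A matrix $M\in\mathrm{SL}_2(R)$ is pointed if $M(\mathbf{j})$ is the identity, and $M\oplus[s_0,s_1]$ is the map with the same sheaf and sections $M\cdot(s_0,s_1)^T$. *)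

(* Defs.v *)
From HB Require Import structures.
From mathcomp Require Import all_boot all_order all_algebra.
From mathcomp Require Import ring_quotient generic_quotient.
From mathcomp Require Import mpoly.
From Stdlib Require Import ClassicalEpsilon.

Set Implicit Arguments.
Unset Strict Implicit.
Unset Printing Implicit Defensive.

Import GRing.Theory.
Local Open Scope ring_scope.
Local Open Scope quotient_scope.

Section Jouanolou.
Variable k : fieldType.

(* The polynomial ring k[x,y,z,w]; variables indexed x=0, y=1, z=2, w=3. *)
Definition Pxyzw := {mpoly k[4]}.
Definition pvar (i : nat) : Pxyzw := 'X_(inord i).

Definition Jgen1 : Pxyzw := pvar 0 + pvar 3 - 1.
Definition Jgen2 : Pxyzw := pvar 0 * pvar 3 - pvar 1 * pvar 2.

Definition inJ (p : Pxyzw) : bool :=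
  if excluded_middle_informative
       (exists c1 c2 : Pxyzw, p = c1 * Jgen1 + c2 * Jgen2)
  then true else false.

Definition jpt : 'I_4 -> k := fun i => if val i == 0%N then 1 else 0.

Lemma inJP p : reflect (exists c1 c2 : Pxyzw, p = c1 * Jgen1 + c2 * Jgen2) (inJ p).
Proof.
rewrite /inJ; case: excluded_middle_informative => h; by constructor.
Qed.

Lemma inJ_idealr_closed : idealr_closed inJ.
Proof.
split.
- by apply/inJP; exists 0, 0; rewrite !mul0r addr0.
- apply/negP => /inJP [c1 [c2 h]].
  have := congr1 (meval jpt) h.
  rewrite meval1 mevalD !mevalM /Jgen1 /Jgen2 mevalB mevalD meval1 mevalB !mevalM.
  rewrite /pvar !mevalXU /jpt /=.
  rewrite (@inordK 3 0) // (@inordK 3 1) // (@inordK 3 2) // (@inordK 3 3) //=.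
  rewrite !(mulr0, mul0r, addr0, subrr, subr0, add0r, mul1r, oppr0) => /eqP.
  by rewrite oner_eq0.
- move=> a u v /inJP [c1 [c2 ->]] /inJP [d1 [d2 ->]].
  apply/inJP; exists (a * c1 + d1), (a * c2 + d2).
  by rewrite !mulrDl !mulrDr !mulrA addrACA.
Qed.

HB.instance Definition _ := isIdealr.Build Pxyzw inJ inJ_idealr_closed.

(* R = k[x,y,z,w]/(x + w - 1, xw - yz), the coordinate ring of J. *)
Definition Rj := {ideal_quot (inJ : idealr Pxyzw)}.

Definition rx : Rj := \pi_Rj (pvar 0).
Definition ry : Rj := \pi_Rj (pvar 1).
Definition rz : Rj := \pi_Rj (pvar 2).
Definition rw : Rj := \pi_Rj (pvar 3).

(* Evaluation at the k-point j = (x-1, y, z, w) of J, i.e. the residue map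
   R -> R/j = k (well defined since the relations vanish at (1,0,0,0)). *)
Definition evj (r : Rj) : k := meval jpt (repr r).

End Jouanolou.

(* Maps to P^1 of nonzero degree, over a coordinate ring A (A = R or R[t]). *)
(* The invertible module of degree d is the submodule of A^2 generated by  *)
(* the two column vectors gen0 d, gen1 d:                                   *)
(*   d = n > 0 : P_n = < (x^n, z^n)^T , (y^n, w^n)^T >                      *)
(*   d = -n < 0: Q_n = < (x^n, y^n)^T , (z^n, w^n)^T >                      *)
Section Maps.
Variable A : comNzRingType.
Variables (x y z w : A).

Definition vec2 (a b : A) : 'cV[A]_2 :=
  \col_(i < 2) (if val i == 0%N then a else b).

Definition gen0 (d : int) : 'cV[A]_2 :=
  match d with
  | Posz n => vec2 (x ^+ n) (z ^+ n)
  | Negz m => vec2 (x ^+ m.+1) (y ^+ m.+1)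
  end.

Definition gen1 (d : int) : 'cV[A]_2 :=
  match d with
  | Posz n => vec2 (y ^+ n) (w ^+ n)
  | Negz m => vec2 (z ^+ m.+1) (w ^+ m.+1)
  end.

(* The coefficient matrix C = [[a0, a1], [b0, b1]] encodes the map
   (a0,a1:b0,b1)_d, whose sections are
   s0 = a0 gen0 + a1 gen1  and  s1 = b0 gen0 + b1 gen1. *)
Definition section (d : int) (C : 'M[A]_2) (i : 'I_2) : 'cV[A]_2 :=
  C i ord0 *: gen0 d + C i ord_max *: gen1 d.

Definition generating (d : int) (C : 'M[A]_2) : Prop :=
  exists D : 'M[A]_2,
    gen0 d = D ord0 ord0 *: section d C ord0 + D ord0 ord_max *: section d C ord_max /\
    gen1 d = D ord_max ord0 *: section d C ord0 + D ord_max ord_max *: section d C ord_max.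

End Maps.

(* Equality of two maps with the same invertible module: an isomorphism of
   the (rank one projective) module with itself, i.e. multiplication by a
   unit, carrying the sections of the first onto those of the second. *)
Definition same_map (A : comNzRingType) (s s' : 'I_2 -> 'cV[A]_2) : Prop :=
  exists u v : A, u * v = 1 /\ forall i, s' i = u *: s i.

Section JMaps.
Variable k : fieldType.
Local Notation R := (Rj k).

Definition secR (d : int) (C : 'M[R]_2) := section (rx k) (ry k) (rz k) (rw k) d C.

Definition is_mapJ (d : int) (C : 'M[R]_2) : Prop :=
  generating (rx k) (ry k) (rz k) (rw k) d C.

(* Pointed: f(j) = [1:0], i.e. the section s1 vanishes at j
   (the fibre of P_n / Q_n at j embeds in k^2). *)
Definition pointed_mapJ (d : int) (C : 'M[R]_2) : Prop :=
  map_mx (@evj k) (secR d C ord_max) = 0.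

Definition pointed_SL2 (M : 'M[R]_2) : Prop :=
  \det M = 1 /\ map_mx (@evj k) M = 1%:M.

(* M (+) (a0,a1:b0,b1)_d has the same module and sections M (s0, s1)^T;
   on coefficient matrices this is C |-> M *m C.  In particular
   M (+) (1,0:0,1)_d is encoded by the coefficient matrix M. *)
Definition oplus (M C : 'M[R]_2) : 'M[R]_2 := M *m C.
Definition id_map : 'M[R]_2 := 1%:M.

(* Maps J x A^1 -> P^1, over R[t] = {poly R}: the module P_n[t] (resp.
   Q_n[t]) with generators the constant images of gen0, gen1. *)
Local Notation Rt := {poly R}.
Definition secRt (d : int) (H : 'M[Rt]_2) :=
  section (rx k)%:P (ry k)%:P (rz k)%:P (rw k)%:P d H.

Definition restr_t (c : R) (v : 'cV[Rt]_2) : 'cV[R]_2 := map_mx (fun p => p.[c]) v.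

(* A pointed naive homotopy from the map (d, C) to the map (d, C'):
   a map H : J x A^1 -> P^1 with H|_{t=0} = f, H|_{t=1} = g, and whose
   restriction to {j} x A^1 is constant at the base point [1:0]. *)
Definition pointed_naive_homotopy (d : int) (C C' : 'M[R]_2) : Prop :=
  exists H : 'M[Rt]_2,
    generating (rx k)%:P (ry k)%:P (rz k)%:P (rw k)%:P d H /\
    map_mx (map_poly (@evj k)) (secRt d H ord_max) = 0 /\
    same_map (fun i => secR d C i) (fun i => restr_t 0 (secRt d H i)) /\
    same_map (fun i => secR d C' i) (fun i => restr_t 1 (secRt d H i)).

End JMaps.

(* Main.v *)
Require Import Defs.
From HB Require Import structures.
From mathcomp Require Import all_boot all_order all_algebra.
From mathcomp Require Import ring_quotient generic_quotient.
From mathcomp Require Import mpoly.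
From mathcomp Require Import ring.
Set Implicit Arguments.
Unset Strict Implicit.
Unset Printing Implicit Defensive.
Import GRing.Theory.
Local Open Scope ring_scope.

Lemma I2P (i : 'I_2) : i = ord0 \/ i = ord_max.
Proof.
case: i => [[|[|m]]] Hi; [left|right|by []]; exact: val_inj.
Qed.

Lemma I1P (i : 'I_1) : i = ord0.
Proof. case: i => [[|m]] Hi //; exact: val_inj. Qed.

Definition mx22 (A : Type) (a b c e : A) : 'M[A]_2 :=
  \matrix_(i, j) if val i == 0%N then (if val j == 0%N then a else b)
                 else (if val j == 0%N then c else e).

Section Gen.
Variable A : comNzRingType.

Lemma det2 (M : 'M[A]_2) :
  \det M = M ord0 ord0 * M ord_max ord_max - M ord0 ord_max * M ord_max ord0.
Proof.
rewrite (expand_det_row _ ord0) big_ord_recl big_ord1 /cofactor !det_mx11.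
rewrite !mxE /= expr0 expr1 !mul1r mulN1r.
have -> : lift ord0 (0 : 'I_1) = ord_max by exact: val_inj.
have -> : lift (@ord_max 1) (0 : 'I_1) = ord0 by exact: val_inj.
by rewrite mulrN.
Qed.

Lemma mx22E (a b c e : A) :
  (mx22 a b c e ord0 ord0 = a) * (mx22 a b c e ord0 ord_max = b) *
  (mx22 a b c e ord_max ord0 = c) * (mx22 a b c e ord_max ord_max = e).
Proof. by rewrite !mxE. Qed.

Definition sec (g0 g1 : 'cV[A]_2) (C : 'M[A]_2) (i : 'I_2) : 'cV[A]_2 :=
  C i ord0 *: g0 + C i ord_max *: g1.

Lemma sum_geo (a b : A) n : a + b = 1 -> a * \sum_(i < n) b ^+ i + b ^+ n = 1.
Proof.
move=> hab; elim: n => [|n IH]; first by rewrite big_ord0 mulr0 add0r expr0.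
rewrite big_ord_recr /= mulrDr -addrA exprS -mulrDl hab mul1r.
exact: IH.
Qed.

Lemma bezout_pow (a b : A) n : a + b = 1 -> exists p q, p * a ^+ n + q * b ^+ n = 1.
Proof.
move=> hab.
have h1 := sum_geo n (etrans (addrC b a) hab).
set s := \sum_(i < n) a ^+ i in h1.
have h2 := sum_geo n (etrans (addrC _ _) h1).
exists (\sum_(i < n) (b * s) ^+ i), (s ^+ n).
by rewrite -[RHS]h2 exprMn; ring.
Qed.

Lemma gen_det1 (g0 g1 : 'cV[A]_2) (H : 'M[A]_2) :
  H ord0 ord0 * H ord_max ord_max - H ord0 ord_max * H ord_max ord0 = 1 ->
  exists D : 'M[A]_2,
   g0 = D ord0 ord0 *: sec g0 g1 H ord0 + D ord0 ord_max *: sec g0 g1 H ord_max /\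
   g1 = D ord_max ord0 *: sec g0 g1 H ord0 + D ord_max ord_max *: sec g0 g1 H ord_max.
Proof.
move=> hd.
exists (mx22 (H ord_max ord_max) (- H ord0 ord_max) (- H ord_max ord0) (H ord0 ord0)).
rewrite !mx22E /sec; split; apply/matrixP => i j; rewrite !mxE.
  by rewrite -[LHS]mul1r -hd; ring.
by rewrite -[LHS]mul1r -hd; ring.
Qed.


Lemma det_core (g00 g01 g10 g11 p q c00 c01 c10 c11 d00 d01 d10 d11 : A) :
  g00 * g11 - g10 * g01 = 0 -> p * g00 + q * g11 = 1 ->
  g00 = d00 * (c00 * g00 + c01 * g10) + d01 * (c10 * g00 + c11 * g10) ->
  g11 = d10 * (c00 * g01 + c01 * g11) + d11 * (c10 * g01 + c11 * g11) ->
  let e := 1 - (c00 * c11 - c01 * c10) in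
  let a0 := e * p * d01 in let b0 := e * q * d11 in
  let a1 := - (e * p * d00) in let b1 := - (e * q * d10) in
  (c00 + a0 * g10 + b0 * g11) * (c11 - a1 * g00 - b1 * g01)
  - (c01 - a0 * g00 - b0 * g01) * (c10 + a1 * g10 + b1 * g11) = 1.
Proof.
move=> hG hpq e0 e1 e a0 b0 a1 b1.
apply/eqP; rewrite -subr_eq0; apply/eqP.
transitivity (e * (p * g00 + q * g11 - 1)
     - e * p * (g00 - (d00 * (c00 * g00 + c01 * g10) + d01 * (c10 * g00 + c11 * g10)))
     - e * q * (g11 - (d10 * (c00 * g01 + c01 * g11) + d11 * (c10 * g01 + c11 * g11)))
     + (a0 * b1 - b0 * a1) * (g00 * g11 - g10 * g01)).
  rewrite /a0 /a1 /b0 /b1 /e; ring.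
by rewrite hpq -e0 -e1 hG !subrr !mulr0 !subr0 addr0.
Qed.

Lemma modify_det (g0 g1 : 'cV[A]_2) (p q : A) (C D : 'M[A]_2) :
  g0 ord0 ord0 * g1 ord_max ord0 - g1 ord0 ord0 * g0 ord_max ord0 = 0 ->
  p * g0 ord0 ord0 + q * g1 ord_max ord0 = 1 ->
  g0 = D ord0 ord0 *: sec g0 g1 C ord0 + D ord0 ord_max *: sec g0 g1 C ord_max ->
  g1 = D ord_max ord0 *: sec g0 g1 C ord0 + D ord_max ord_max *: sec g0 g1 C ord_max ->
  exists M : 'M[A]_2,
    (M ord0 ord0 * M ord_max ord_max - M ord0 ord_max * M ord_max ord0 = 1) /\
    (forall i, sec g0 g1 M i = sec g0 g1 C i) /\
    (forall i, exists a b, M i ord0 = C i ord0 + a * g1 ord0 ord0 + b * g1 ord_max ord0).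
Proof.
move=> hG hpq hg0 hg1.
have e0 := congr1 (fun v : 'cV[A]_2 => v ord0 ord0) hg0.
have e1 := congr1 (fun v : 'cV[A]_2 => v ord_max ord0) hg1.
move: e0 e1; rewrite /sec /= !mxE => e0 e1.
set g00 := g0 ord0 ord0 in hG hpq e0 e1 *.
set g01 := g0 ord_max ord0 in hG hpq e0 e1 *.
set g10 := g1 ord0 ord0 in hG hpq e0 e1 *.
set g11 := g1 ord_max ord0 in hG hpq e0 e1 *.
set e := 1 - (C ord0 ord0 * C ord_max ord_max - C ord0 ord_max * C ord_max ord0).
set a0 := e * p * D ord0 ord_max.
set b0 := e * q * D ord_max ord_max.
set a1 := - (e * p * D ord0 ord0).
set b1 := - (e * q * D ord_max ord0).
exists (mx22 (C ord0 ord0 + a0 * g10 + b0 * g11) (C ord0 ord_max - a0 * g00 - b0 * g01)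
             (C ord_max ord0 + a1 * g10 + b1 * g11) (C ord_max ord_max - a1 * g00 - b1 * g01)).
rewrite !mx22E; split; last split.
- exact: (det_core hG hpq e0 e1).
- move=> i; apply/matrixP => r j; rewrite (I1P j).
  case: (I2P i) => -> ; case: (I2P r) => ->; rewrite /sec !mxE /= -/g00 -/g01 -/g10 -/g11.
  + transitivity (C ord0 ord0 * g00 + C ord0 ord_max * g10 + b0 * (g00 * g11 - g10 * g01)); first by ring.
    by rewrite hG mulr0 addr0.
  + transitivity (C ord0 ord0 * g01 + C ord0 ord_max * g11 - a0 * (g00 * g11 - g10 * g01)); first by ring.
    by rewrite hG mulr0 subr0.
  + transitivity (C ord_max ord0 * g00 + C ord_max ord_max * g10 + b1 * (g00 * g11 - g10 * g01)); first by ring.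
    by rewrite hG mulr0 addr0.
  + transitivity (C ord_max ord0 * g01 + C ord_max ord_max * g11 - a1 * (g00 * g11 - g10 * g01)); first by ring.
    by rewrite hG mulr0 subr0.
- move=> i; case: (I2P i) => ->; rewrite !mx22E.
  + by exists a0, b0.
  + by exists a1, b1.
Qed.


Lemma sec_scale (g0 g1 : 'cV[A]_2) (C : 'M[A]_2) u i :
  sec g0 g1 (u *: C) i = u *: sec g0 g1 C i.
Proof. by rewrite /sec !mxE scalerDr !scalerA. Qed.

Lemma gen_scale (g g0 g1 : 'cV[A]_2) (C D : 'M[A]_2) u v (j : 'I_2) :
  u * v = 1 ->
  g = D j ord0 *: sec g0 g1 C ord0 + D j ord_max *: sec g0 g1 C ord_max ->
  g = (v *: D) j ord0 *: sec g0 g1 (u *: C) ord0 + (v *: D) j ord_max *: sec g0 g1 (u *: C) ord_max.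
Proof.
move=> huv h; apply/matrixP => r c.
have := congr1 (fun m : 'cV[A]_2 => m r c) h; rewrite /sec !mxE => e.
rewrite [LHS]e -[LHS]mul1r -huv; ring.
Qed.

Lemma secE (g0 g1 : 'cV[A]_2) (C : 'M[A]_2) i r j :
  sec g0 g1 C i r j = C i ord0 * g0 r j + C i ord_max * g1 r j.
Proof. by rewrite /sec !mxE. Qed.

Lemma scaleE (C : 'M[A]_2) u i j : (u *: C) i j = u * C i j.
Proof. by rewrite mxE. Qed.

Lemma gen_entry (g g0 g1 : 'cV[A]_2) (C D : 'M[A]_2) (j : 'I_2) r :
  g = D j ord0 *: sec g0 g1 C ord0 + D j ord_max *: sec g0 g1 C ord_max ->
  g r ord0 = D j ord0 * (C ord0 ord0 * g0 r ord0 + C ord0 ord_max * g1 r ord0)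
           + D j ord_max * (C ord_max ord0 * g0 r ord0 + C ord_max ord_max * g1 r ord0).
Proof. by move=> h; rewrite {1}h !mxE. Qed.

Lemma map_sec_eq0 (B : nmodType) (f : A -> B) (g0 g1 : 'cV[A]_2) (C : 'M[A]_2) i r :
  map_mx f (sec g0 g1 C i) = 0 ->
  f (C i ord0 * g0 r ord0 + C i ord_max * g1 r ord0) = 0.
Proof. by move=> /matrixP /(_ r ord0); rewrite !mxE. Qed.

Lemma mx22_eta (M : 'M[A]_2) :
  M = mx22 (M ord0 ord0) (M ord0 ord_max) (M ord_max ord0) (M ord_max ord_max).
Proof.
apply/matrixP => i j; rewrite mxE.
by case: (I2P i) => ->; case: (I2P j) => ->.
Qed.

Lemma one22 : (1%:M : 'M[A]_2) = mx22 1 0 0 1.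
Proof. by apply/matrixP => i j; case: (I2P i) => ->; case: (I2P j) => ->; rewrite !mxE. Qed.

Lemma restr_gen (g0 g1 : 'cV[A]_2) (H : 'M[{poly A}]_2) c i :
  map_mx (horner^~ c) (H i ord0 *: map_mx polyC g0 + H i ord_max *: map_mx polyC g1)
  = sec g0 g1 (map_mx (horner^~ c) H) i.
Proof.
apply/matrixP => r j; rewrite /sec !mxE hornerD !hornerM !hornerC.
done.
Qed.

Lemma pt_gen (B : comNzRingType) (f : {rmorphism A -> B}) (g0 g1 : 'cV[A]_2) a b :
  map_mx (map_poly f) (a%:P *: map_mx polyC g0 + b%:P *: map_mx polyC g1)
  = map_mx polyC (map_mx f (a *: g0 + b *: g1)).
Proof.
apply/matrixP => r j; rewrite !mxE.
by rewrite -!polyCM -polyCD map_polyC.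
Qed.

End Gen.

Lemma map_mx22 (A B : Type) (f : A -> B) (a b c e : A) :
  map_mx f (mx22 a b c e) = mx22 (f a) (f b) (f c) (f e).
Proof. by apply/matrixP => i j; rewrite !mxE; case: ifP; case: ifP. Qed.


Local Open Scope quotient_scope.

Section S.
Variable k : fieldType.
Local Notation R := (Rj k).
Lemma inJ0 p : inJ p -> meval (jpt k) p = 0.
Proof.
move=>/inJP [c1 [c2 ->]].
  rewrite mevalD !mevalM /Jgen1 /Jgen2 mevalB mevalD meval1 mevalB !mevalM.
  rewrite /pvar !mevalXU /jpt /=.
  rewrite (@inordK 3 0) // (@inordK 3 1) // (@inordK 3 2) // (@inordK 3 3) //=.
  by rewrite !(mulr0, mul0r, addr0, subrr, subr0, add0r, mul1r, oppr0).
Qed.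
Lemma evj_pi p : evj (\pi_R p) = meval (jpt k) p.
Proof.
rewrite /evj.
have : inJ (repr (\pi_R p) - p).
  by have := @Quotient.idealrBE _ (@inJ k : idealr (Pxyzw k)) (repr (\pi_R p)) p; rewrite reprK eqxx => h; exact: h.
move=> /inJ0; rewrite mevalB => /eqP; rewrite subr_eq0 => /eqP.
done.
Qed.
Lemma evj_zmod : zmod_morphism (@evj k).
Proof.
move=> a b; rewrite -[a]reprK -[b]reprK -rmorphB !evj_pi mevalB.
done.
Qed.
Lemma evj_monoid : monoid_morphism (@evj k).
Proof.
split; first by rewrite -(rmorph1 \pi_R) evj_pi meval1.
move=> a b; rewrite -[a]reprK -[b]reprK -rmorphM !evj_pi mevalM.
done.
Qed.
End S.
HB.instance Definition _ k := GRing.isZmodMorphism.Build (Rj k) k (@evj k) (@evj_zmod k).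
HB.instance Definition _ k := GRing.isMonoidMorphism.Build (Rj k) k (@evj k) (@evj_monoid k).

Section T.
Variable k : fieldType.
Local Notation R := (Rj k).
Local Notation x := (rx k).
Local Notation y := (ry k).
Local Notation z := (rz k).
Local Notation w := (rw k).

Lemma evjX (a : R) n : evj (a ^+ n) = evj a ^+ n.
Proof. exact: rmorphXn. Qed.
Lemma evjM (a b : R) : evj (a * b) = evj a * evj b.
Proof. exact: rmorphM. Qed.
Lemma evjD (a b : R) : evj (a + b) = evj a + evj b.
Proof. exact: rmorphD. Qed.
Lemma evjB (a b : R) : evj (a - b) = evj a - evj b.
Proof. exact: rmorphB. Qed.
Lemma evjN (a : R) : evj (- a) = - evj a.
Proof. exact: rmorphN. Qed.

Lemma ev_pvar i : evj (\pi_R (pvar k i)) = jpt k (inord i).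
Proof. by rewrite evj_pi /pvar mevalXU. Qed.

Lemma val_inord3 i : (i < 4)%N -> \val (inord i : 'I_4) = i.
Proof. exact: inordK. Qed.

Lemma evx : evj x = 1.
Proof. by rewrite /rx ev_pvar /jpt val_inord3. Qed.
Lemma evy : evj y = 0.
Proof. by rewrite /ry ev_pvar /jpt val_inord3. Qed.
Lemma evz : evj z = 0.
Proof. by rewrite /rz ev_pvar /jpt val_inord3. Qed.
Lemma evw : evj w = 0.
Proof. by rewrite /rw ev_pvar /jpt val_inord3. Qed.

Lemma pi_inJ p : inJ p -> \pi_R p = 0.
Proof.
move=> h; apply/eqP; rewrite -(rmorph0 \pi_R).
have := @Quotient.idealrBE _ (@inJ k : idealr (Pxyzw k)) p 0.
rewrite subr0 => <-; exact: h.
Qed.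

Lemma rel1 : x + w = 1.
Proof.
apply/eqP; rewrite -subr_eq0; apply/eqP.
have h : inJ (Jgen1 k) by apply/inJP; exists 1, 0; rewrite mul1r mul0r addr0.
have := pi_inJ h.
by rewrite /Jgen1 !rmorphB rmorphD rmorph1.
Qed.

Lemma rel2 : x * w = y * z.
Proof.
apply/eqP; rewrite -subr_eq0; apply/eqP.
have h : inJ (Jgen2 k) by apply/inJP; exists 0, 1; rewrite mul1r mul0r add0r.
have := pi_inJ h.
by rewrite /Jgen2 !rmorphB !rmorphM.
Qed.


Local Notation G0 d := (gen0 x y z d).
Local Notation G1 d := (gen1 y z w d).

Lemma gens_facts (d : int) : d != 0 ->
  [/\ G0 d ord0 ord0 * G1 d ord_max ord0 - G1 d ord0 ord0 * G0 d ord_max ord0 = 0,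
      (exists p q, p * G0 d ord0 ord0 + q * G1 d ord_max ord0 = 1),
      evj (G0 d ord0 ord0) = 1, evj (G1 d ord0 ord0) = 0 & evj (G1 d ord_max ord0) = 0].
Proof.
case: d => [n|m] hd; rewrite /gen0 /gen1 /vec2 !mxE /=.
  have hn : (n == 0)%N = false by case: n hd.
  split.
  - by rewrite -!exprMn rel2 mulrC subrr.
  - exact: bezout_pow rel1.
  - by rewrite evjX evx expr1n.
  - by rewrite evjX evy expr0n hn.
  - by rewrite evjX evw expr0n hn.
split.
- by rewrite -!exprMn rel2 [z * y]mulrC subrr.
- exact: bezout_pow rel1.
- by rewrite evjX evx expr1n.
- by rewrite evjX evz expr0n.
- by rewrite evjX evw expr0n.
Qed.

Lemma polyCXn (a : R) n : a%:P ^+ n = (a ^+ n)%:P.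
Proof. by rewrite polyC_exp. Qed.
Lemma genC0 d : gen0 x%:P y%:P z%:P d = map_mx polyC (G0 d).
Proof. by case: d => [n|m]; apply/matrixP => i j; rewrite !mxE; case: ifP => _; rewrite polyCXn. Qed.
Lemma genC1 d : gen1 y%:P z%:P w%:P d = map_mx polyC (G1 d).
Proof. by case: d => [n|m]; apply/matrixP => i j; rewrite !mxE; case: ifP => _; rewrite polyCXn. Qed.

Definition cst (c : k) : R := \pi_R (c%:MP).
Lemma evj_cst c : evj (cst c) = c.
Proof. by rewrite /cst evj_pi mevalC. Qed.
Lemma cstM a b : cst (a * b) = cst a * cst b.
Proof. by rewrite /cst -rmorphM mpolyCM. Qed.
Lemma cst1 : cst 1 = 1.
Proof. by rewrite /cst rmorph1. Qed.


Lemma pt_Rj (g0 g1 : 'cV[R]_2) a b :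
  map_mx (map_poly (@evj k)) (a%:P *: map_mx polyC g0 + b%:P *: map_mx polyC g1)
  = map_mx polyC (map_mx (@evj k) (a *: g0 + b *: g1)).
Proof. exact: (pt_gen (@evj k)). Qed.

Lemma map_evjZ (a : R) (v : 'cV[R]_2) : map_mx (@evj k) (a *: v) = evj a *: map_mx (@evj k) v.
Proof. by apply/matrixP => i j; rewrite !mxE evjM. Qed.

End T.


Lemma core (A : comNzRingType) (K : fieldType) (f : {rmorphism A -> K}) (cst : K -> A)
  (hcst : forall c, f (cst c) = c) (hcstM : forall a b, cst (a * b) = cst a * cst b)
  (hcst1 : cst 1 = 1)
  (g0 g1 : 'cV[A]_2) (C D : 'M[A]_2) (p q : A) :
  g0 ord0 ord0 * g1 ord_max ord0 - g1 ord0 ord0 * g0 ord_max ord0 = 0 ->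
  p * g0 ord0 ord0 + q * g1 ord_max ord0 = 1 ->
  f (g0 ord0 ord0) = 1 -> f (g1 ord0 ord0) = 0 -> f (g1 ord_max ord0) = 0 ->
  g0 = D ord0 ord0 *: sec g0 g1 C ord0 + D ord0 ord_max *: sec g0 g1 C ord_max ->
  g1 = D ord_max ord0 *: sec g0 g1 C ord0 + D ord_max ord_max *: sec g0 g1 C ord_max ->
  map_mx f (sec g0 g1 C ord_max) = 0 ->
  exists (M : 'M[A]_2) (H : 'M[{poly A}]_2) (u v : A),
   [/\ \det M = 1, map_mx f M = 1%:M,
       H ord0 ord0 * H ord_max ord_max - H ord0 ord_max * H ord_max ord0 = 1,
       map_mx (map_poly f) (H ord_max ord0 *: map_mx polyC g0 + H ord_max ord_max *: map_mx polyC g1) = 0 &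
       (u * v = 1 /\
       (forall i, sec g0 g1 (map_mx (horner^~ 0) H) i = u *: sec g0 g1 C i) /\
       (forall i, sec g0 g1 (map_mx (horner^~ 1) H) i = sec g0 g1 M i))].
Proof.
move=> hG hpq ev00 ev10 ev11 hg0 hg1 hpt.
have hC10 : f (C ord_max ord0) = 0.
  have := map_sec_eq0 ord0 hpt.
  by rewrite rmorphD !rmorphM ev00 ev10 mulr1 mulr0 addr0.
set a := f (C ord0 ord0).
have ha : a != 0.
  apply/eqP => a0.
  have := congr1 f (gen_entry ord0 hg0).
  rewrite !(rmorphD, rmorphM) ev00 ev10 hC10 -/a a0.
  by rewrite !(mulr0, mul0r, addr0) => /eqP; rewrite oner_eq0.
pose u := cst a^-1; pose v := cst a.
have huv : u * v = 1 by rewrite -hcstM mulVf // hcst1.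
have hg0' := gen_scale huv hg0.
have hg1' := gen_scale huv hg1.
have [M' [hdet' [hsec' hcol]]] := modify_det hG hpq hg0' hg1'.
have evM00 : f (M' ord0 ord0) = 1.
  have [al [be ->]] := hcol ord0.
  rewrite scaleE !(rmorphD, rmorphM) hcst -/a ev10 ev11 !mulr0 !addr0.
  by rewrite mulVf.
have evM10 : f (M' ord_max ord0) = 0.
  have [al [be ->]] := hcol ord_max.
  by rewrite scaleE !(rmorphD, rmorphM) ev10 ev11 hC10 !mulr0 !addr0.
have evM11 : f (M' ord_max ord_max) = 1.
  have := congr1 f hdet'.
  by rewrite rmorphB !rmorphM evM00 evM10 mul1r mulr0 subr0 rmorph1.
pose c := f (M' ord0 ord_max).
pose cR := cst c.
exists (mx22 (M' ord0 ord0 - cR * M' ord_max ord0) (M' ord0 ord_max - cR * M' ord_max ord_max)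
             (M' ord_max ord0) (M' ord_max ord_max)).
exists (mx22 ((M' ord0 ord0)%:P - (cR * M' ord_max ord0)%:P * 'X)
             ((M' ord0 ord_max)%:P - (cR * M' ord_max ord_max)%:P * 'X)
             (M' ord_max ord0)%:P (M' ord_max ord_max)%:P).
exists u, v; split.
- rewrite det2 !mx22E -hdet'; ring.
- rewrite map_mx22 one22.
  by rewrite !rmorphB !rmorphM /cR hcst evM00 evM10 evM11 mulr0 subr0 mulr1 subrr.
- rewrite !mx22E.
  transitivity ((M' ord0 ord0 * M' ord_max ord_max - M' ord0 ord_max * M' ord_max ord0)%:P);
    last by rewrite hdet'.
  rewrite polyCB !polyCM; ring.
- rewrite !mx22E pt_gen.
  have -> : M' ord_max ord0 *: g0 + M' ord_max ord_max *: g1 = u *: sec g0 g1 C ord_max.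
    by rewrite -sec_scale -hsec'.
  apply/matrixP => i j; rewrite !mxE rmorphM.
  have := congr1 (fun m : 'cV[K]_2 => m i j) hpt; rewrite !mxE => ->.
  by rewrite mulr0.
- split; first exact: huv.
  split.
- move=> i; rewrite map_mx22 !hornerE -sec_scale -hsec'.
  by rewrite ?mulr0 ?oppr0 ?addr0 ?subr0 -mx22_eta.
- by move=> i; rewrite map_mx22 !hornerE ?mulr1.
Qed.

Import GRing.Theory.
Local Open Scope ring_scope.

Theorem proposition3p18 (k : fieldType) (d : int) (C : 'M[Rj k]_2) :
  d != 0 -> is_mapJ d C -> pointed_mapJ d C ->
  exists M : 'M[Rj k]_2,
    pointed_SL2 M /\ pointed_naive_homotopy d C (oplus M (id_map k)).
Proof.
move=> hd [D [hg0 hg1]] hpt.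
have [hG [p [q hpq]] ev00 ev10 ev11] := @gens_facts k d hd.
pose g0 := gen0 (rx k) (ry k) (rz k) d; pose g1 := gen1 (ry k) (rz k) (rw k) d.
have hg0s : g0 = D ord0 ord0 *: sec g0 g1 C ord0 + D ord0 ord_max *: sec g0 g1 C ord_max := hg0.
have hg1s : g1 = D ord_max ord0 *: sec g0 g1 C ord0 + D ord_max ord_max *: sec g0 g1 C ord_max := hg1.
have hpts : map_mx (@evj k) (sec g0 g1 C ord_max) = 0 := hpt.
have [M [H [u [v [hdetM hevM hdetH hptH [huv [h0 h1]]]]]]] :=
  @core _ _ (@evj k) (@cst k) (@evj_cst k) (@cstM k) (@cst1 k) g0 g1 C D p q
     hG hpq ev00 ev10 ev11 hg0s hg1s hpts.
exists M; rewrite /oplus /id_map mulmx1.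
split; first by split.
exists H; split.
  exact: (gen_det1 (gen0 (rx k)%:P (ry k)%:P (rz k)%:P d) (gen1 (ry k)%:P (rz k)%:P (rw k)%:P d) hdetH).
split.
  rewrite /secRt /section genC0 genC1; exact: hptH.
split.
  exists u, v; split; first exact: huv.
  move=> i.
  rewrite /restr_t /secRt /section genC0 genC1 restr_gen; exact: h0.
exists 1, 1; split; first by rewrite mulr1.
move=> i; rewrite /restr_t /secRt /section genC0 genC1 restr_gen scale1r; exact: h1.
Qed.
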